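(* Let $S \geq 1$ and, for $i = 1,\dots,S$, let $\boldsymbol{M}_i \in \mathbb{R}^{m_i \times m_i}$ be symmetric positive definite, let $\boldsymbol{K}_i \in \mathbb{R}^{m_i \times m_i}$ be symmetric positive semidefinite, and let $\boldsymbol{C}_i \in \mathbb{R}^{p \times m_i}$ be signed Boolean matrices such that $[\boldsymbol{C}_1 \ \cdots \ \boldsymbol{C}_S]$ has full row rank $p$. Let $0 \le \gamma \le 1$, $\Delta t > 0$ and $\alpha > 0$, and let $\omega_i^{\max}$ denote the largest eigenvalue of $\boldsymbol{K}_i \boldsymbol{\phi} = \omega \boldsymbol{M}_i \boldsymbol{\phi}$. Assume that either $1/2 \le \gamma \le 1$ (with no further restriction on $\alpha>0$, $\Delta t>0$), or $0 \le \gamma < 1/2$ together with $\alpha \le 1/|\gamma - 1/2|$ and $\Delta t\, \omega_i^{\max} \le \frac{2}{1-2\gamma} - \alpha$ for all $i$. Suppose sequences $\boldsymbol{d}_i^{(n)}, \boldsymbol{v}_i^{(n)} \in \mathbb{R}^{m_i}$ and $\boldsymbol{\lambda}^{(n)} \in \mathbb{R}^p$, $n \geq 0$, satisfy (the Baumgarte stabilized method with zero external forcing): for all $n \ge 0$ and all $i$, $\boldsymbol{M}_i \boldsymbol{v}_i^{(n)} + \boldsymbol{K}_i \boldsymbol{d}_i^{(n)} = \boldsymbol{C}_i^{\mathrm{T}} \boldsymbol{\lambda}^{(n)}$ and $\sum_{i=1}^S \boldsymbol{C}_i \boldsymbol{v}_i^{(n)} + \frac{\alpha}{\Delta t}\sum_{i=1}^S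 \boldsymbol{C}_i \boldsymbol{d}_i^{(n)} = \boldsymbol{0}$; and for all $n \geq 1$, $\boldsymbol{d}_i^{(n)} = \boldsymbol{d}_i^{(n-1)} + \Delta t\left((1-\gamma)\boldsymbol{v}_i^{(n-1)} + \gamma \boldsymbol{v}_i^{(n)}\right)$. Then the sequences $(\boldsymbol{v}_i^{(n)})_n$, $(\boldsymbol{d}_i^{(n+1)} - \boldsymbol{d}_i^{(n)})_n$ ($i=1,\dots,S$), $(\boldsymbol{\lambda}^{(n+1)} - \boldsymbol{\lambda}^{(n)})_n$ and the constraint drift $\left(\sum_{i=1}^S \boldsymbol{C}_i \boldsymbol{d}_i^{(n)}\right)_n$ are all bounded.
   Context: A signed Boolean matrix is a matrix whose entries are in $\{-1,0,+1\}$ and each of whose rows has at most one nonzero entry. A sequence of vectors is bounded if there is a constant $C$ independent of $n$ with $\|\boldsymbol{x}^{(n)}\| < C$ for all $n$. For $\omega_i^{\max} > 0$ the time-step condition reads $\Delta t \le \frac{2}{(1-2\gamma)\omega_i^{\max}} - \frac{\alpha}{\omega_i^{\max}}$. *)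

(* Defs.v *)
From HB Require Import structures.
From mathcomp Require Import all_boot all_order all_algebra.
From mathcomp Require Import reals.
Set Implicit Arguments. Unset Strict Implicit. Unset Printing Implicit Defensive.
Import Order.TTheory GRing.Theory Num.Theory.
Local Open Scope ring_scope.

Definition sym_mx {R : realType} {m : nat} (A : 'M[R]_m) : Prop := A^T = A.

Definition spd_mx {R : realType} {m : nat} (A : 'M[R]_m) : Prop :=
  sym_mx A /\ forall x : 'cV[R]_m, x != 0 -> 0 < (x^T *m A *m x) ord0 ord0.

Definition spsd_mx {R : realType} {m : nat} (A : 'M[R]_m) : Prop :=
  sym_mx A /\ forall x : 'cV[R]_m, 0 <= (x^T *m A *m x) ord0 ord0.

Definition signed_boolean_mx {R : realType} {p m : nat} (C : 'M[R]_(p, m)) : Prop :=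
  (forall i j, C i j = 0 \/ C i j = 1 \/ C i j = -1) /\
  (forall i j k, C i j != 0 -> C i k != 0 -> j = k).

Definition gen_eigenvalue {R : realType} {m : nat} (K M : 'M[R]_m) (w : R) : Prop :=
  exists phi : 'cV[R]_m, phi != 0 /\ K *m phi = w *: (M *m phi).

Definition largest_gen_eigenvalue {R : realType} {m : nat} (K M : 'M[R]_m) (w : R) : Prop :=
  gen_eigenvalue K M w /\ forall w', gen_eigenvalue K M w' -> w' <= w.

(* A sequence of vectors is bounded: there is C with ||x^(n)|| < C for all n
   (max-norm on entries; all norms are equivalent in finite dimension). *)
Definition bounded_seq {R : realType} {a b : nat} (x : nat -> 'M[R]_(a, b)) : Prop :=
  exists C : R, forall n i j, `|x n i j| < C.

(* Main.v *)
Require Import Defs.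
From HB Require Import structures.
From mathcomp Require Import all_boot all_order all_algebra.
From mathcomp Require Import reals.
From mathcomp Require Import boolp classical_sets topology normedtype derive.
From mathcomp Require Import ring lra.
Import Order.TTheory GRing.Theory Num.Theory.
Local Open Scope ring_scope.
Set Implicit Arguments. Unset Strict Implicit. Unset Printing Implicit Defensive.

Definition bf {R : realType} {n : nat} (B : 'M[R]_n) (x y : 'cV[R]_n) : R :=
  (x^T *m B *m y) ord0 ord0.
Definition qf {R : realType} {n : nat} (B : 'M[R]_n) (x : 'cV[R]_n) : R := bf B x x.

Lemma bfDr (R : realType) n (B : 'M[R]_n) x y z : bf B x (y + z) = bf B x y + bf B x z.
Proof. by rewrite /bf mulmxDr mxE. Qed.
Lemma bfZr (R : realType) n (B : 'M[R]_n) x (a : R) y : bf B x (a *: y) = a * bf B x y.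
Proof. by rewrite /bf -scalemxAr mxE. Qed.
Lemma bfNr (R : realType) n (B : 'M[R]_n) x y : bf B x (- y) = - bf B x y.
Proof. by rewrite -scaleN1r bfZr mulN1r. Qed.
Lemma bfBr (R : realType) n (B : 'M[R]_n) x y z : bf B x (y - z) = bf B x y - bf B x z.
Proof. by rewrite bfDr bfNr. Qed.
Lemma bfDl (R : realType) n (B : 'M[R]_n) x y z : bf B (x + y) z = bf B x z + bf B y z.
Proof. by rewrite /bf raddfD /= !mulmxDl mxE. Qed.
Lemma bfZl (R : realType) n (B : 'M[R]_n) x (a : R) y : bf B (a *: x) y = a * bf B x y.
Proof. by rewrite /bf linearZ /= -!scalemxAl mxE. Qed.
Lemma bfNl (R : realType) n (B : 'M[R]_n) x y : bf B (- x) y = - bf B x y.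
Proof. by rewrite -scaleN1r bfZl mulN1r. Qed.
Lemma bfBl (R : realType) n (B : 'M[R]_n) x y z : bf B (x - y) z = bf B x z - bf B y z.
Proof. by rewrite bfDl bfNl. Qed.
Lemma bf0r (R : realType) n (B : 'M[R]_n) x : bf B x 0 = 0.
Proof. by rewrite /bf mulmx0 mxE. Qed.
Lemma bf0l (R : realType) n (B : 'M[R]_n) x : bf B 0 x = 0.
Proof. by rewrite /bf trmx0 !mul0mx mxE. Qed.
Lemma bf_sym (R : realType) n (B : 'M[R]_n) x y : B^T = B -> bf B x y = bf B y x.
Proof.
move=> hB; rewrite /bf.
have -> : (x^T *m B *m y) ord0 ord0 = (x^T *m B *m y)^T ord0 ord0 by rewrite [in RHS]mxE.
by rewrite !trmx_mul trmxK hB mulmxA.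
Qed.
Lemma bfDM (R : realType) n (B B' : 'M[R]_n) x y : bf (B + B') x y = bf B x y + bf B' x y.
Proof. by rewrite /bf mulmxDr mulmxDl mxE. Qed.
Lemma bfZM (R : realType) n (B : 'M[R]_n) (a : R) x y : bf (a *: B) x y = a * bf B x y.
Proof. by rewrite /bf -scalemxAr -scalemxAl mxE. Qed.
Lemma bfNM (R : realType) n (B : 'M[R]_n) x y : bf (- B) x y = - bf B x y.
Proof. by rewrite -scaleN1r bfZM mulN1r. Qed.

Lemma quad_disc (R : realType) (a b c : R) : 0 <= c ->
  (forall t : R, 0 <= a + 2 * t * b + t ^+ 2 * c) -> b ^+ 2 <= a * c.
Proof.
move=> c0 H; have [c0'|cpos] := eqVneq c 0.
  subst c; have [b0|bn0] := eqVneq b 0; first by subst b; rewrite expr0n /= mulr0.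
  have := H (- (a + 1) / (2 * b)); rewrite mulr0 addr0.
  have -> : 2 * (- (a + 1) / (2 * b)) * b = - (a + 1).
    by field.
  lra.
have cp : 0 < c by rewrite lt_def cpos c0.
have := H (- b / c).
have -> : a + 2 * (- b / c) * b + (- b / c) ^+ 2 * c = a - b ^+ 2 / c.
  by field; rewrite lt0r_neq0.
rewrite subr_ge0 ler_pdivrMr //; lra.
Qed.

Lemma qfD (R : realType) n (B : 'M[R]_n) x y : B^T = B ->
  qf B (x + y) = qf B x + 2 * bf B x y + qf B y.
Proof.
move=> hB; rewrite /qf !(bfDl, bfDr) (bf_sym y x hB); lra.
Qed.

Lemma qfZ (R : realType) n (B : 'M[R]_n) (a : R) x : qf B (a *: x) = a ^+ 2 * qf B x.
Proof. by rewrite /qf bfZl bfZr mulrA expr2. Qed.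

Lemma qfN (R : realType) n (B : 'M[R]_n) x : qf B (- x) = qf B x.
Proof. by rewrite /qf bfNl bfNr opprK. Qed.

Lemma cs_bf (R : realType) n (B : 'M[R]_n) x y : B^T = B -> (forall z, 0 <= qf B z) ->
  bf B x y ^+ 2 <= qf B x * qf B y.
Proof.
move=> hB hpsd; apply: quad_disc => // t.
have := hpsd (x + t *: y); rewrite qfD // qfZ bfZr; lra.
Qed.

Lemma psd_null (R : realType) n (B : 'M[R]_n) x : B^T = B -> (forall z, 0 <= qf B z) ->
  qf B x = 0 -> B *m x = 0.
Proof.
move=> hB hpsd hx; apply/matrixP => j k; rewrite (ord1 k) [RHS]mxE.
have := cs_bf (delta_mx j ord0) x hB hpsd; rewrite hx mulr0.
have -> : bf B (delta_mx j ord0) x = (B *m x) j ord0.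
  by rewrite /bf -mulmxA trmx_delta -rowE mxE.
move=> h; apply/eqP; rewrite -sqrf_eq0; apply/eqP/le_anti; rewrite h sqr_ge0 //.
Qed.

Lemma qf_ge0_spd (R : realType) n (M : 'M[R]_n) x : spd_mx M -> 0 <= qf M x.
Proof.
move=> [_ hM]; have [->|xn0] := eqVneq x 0; first by rewrite /qf bf0l.
exact/ltW/hM.
Qed.

Lemma qf_sub_le (R : realType) n (M : 'M[R]_n) x y : M^T = M -> (forall z, 0 <= qf M z) ->
  qf M (x - y) <= 2 * qf M x + 2 * qf M y.
Proof.
move=> hs hp; have h1 := hp (x + y).
rewrite qfD // in h1; rewrite qfD // bfNr qfN; lra.
Qed.

Lemma qf_convex (R : realType) n (M : 'M[R]_n) (g : R) x y : M^T = M -> (forall z, 0 <= qf M z) ->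
  0 <= g <= 1 -> qf M ((1 - g) *: x + g *: y) <= qf M x + qf M y.
Proof.
move=> hs hp /andP[g0 g1].
have h := hp (x - y); rewrite qfD // bfNr qfN in h.
have hx := hp x; have hy := hp y.
rewrite qfD // !qfZ bfZl bfZr.
have e1 : 0 <= (1 - g) * g by nra.
nra.
Qed.

Import numFieldNormedType.Exports.
Local Open Scope classical_set_scope.

Lemma cont_sum (R : realType) (T : topologicalType) (I : Type) (r : seq I)
  (F : I -> T -> R) : (forall i, continuous (F i)) ->
  continuous (fun x => \sum_(i <- r) F i x).
Proof.
move=> hF; elim: r => [|i r IH].
  under eq_fun do rewrite big_nil; exact: cst_continuous.
under eq_fun do rewrite big_cons.
move=> x; apply: (@continuousD _ _ _ (F i) (fun x => \sum_(j <- r) F j x)).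
  exact: hF.
exact: IH.
Qed.

Lemma qf_rowE (R : realType) n (B : 'M[R]_n) (u : 'rV[R]_n) :
  qf B u^T = \sum_k (\sum_j u ord0 j * B j k) * u ord0 k.
Proof.
rewrite /qf /bf trmxK mxE; apply: eq_bigr => k _; rewrite !mxE.
by congr (_ * _).
Qed.

Lemma qf_row_cont (R : realType) n (B : 'M[R]_n) :
  continuous (fun u : 'rV[R]_n => qf B u^T).
Proof.
under eq_fun do rewrite qf_rowE.
apply: cont_sum => k x; apply: continuousM; last exact: coord_continuous.
apply: cont_sum => j y; apply: continuousM; first exact: coord_continuous.
exact: cst_continuous.
Qed.

Lemma rayleigh_eig (R : realType) n (K M : 'M[R]_n) : (0 < n)%N -> K^T = K -> spd_mx M ->
  exists mu, gen_eigenvalue K M mu /\ forall x, qf K x <= mu * qf M x.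
Proof.
move=> n0 hK [hMs hMp].
have Mpos : forall x, x != 0 -> 0 < qf M x by move=> x /hMp.
pose A : set 'rV[R]_n := fun u => `|u| = 1.
pose f := fun u : 'rV[R]_n => qf K u^T / qf M u^T.
have nz : forall u : 'rV[R]_n, A u -> u^T != 0.
  move=> u; rewrite /A /= => hu; rewrite trmx_eq0; apply/eqP => u0.
  by move: hu; rewrite u0 normr0 => /eqP; rewrite eq_sym oner_eq0.
have A0 : (A !=set0)%classic.
  pose u1 := const_mx 1 : 'rV[R]_n.
  have u1n : u1 != 0.
    apply/eqP => /matrixP /(_ ord0 (Ordinal n0)); rewrite !mxE => /eqP.
    by rewrite oner_eq0.
  exists (`|u1|^-1 *: u1); rewrite /A /= normrZ ger0_norm ?invr_ge0 // mulVf //.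
  by rewrite normr_eq0.
have cA : compact A.
  apply: bounded_closed_compact.
    rewrite /= /bounded_near; near=> M0 => x Ax /=; rewrite Ax.
    near: M0; apply: nbhs_pinfty_ge; exact: num_real.
  have -> : A = preimage (fun u : 'rV[R]_n => `|u| : R) (fun x : R => x = 1) by [].
  apply: preimage_closed.
    by move=> x _; exact: norm_continuous.
  exact: closed_eq.
have cf : {within A, continuous f}.
  apply: continuous_in_subspaceT => u; rewrite inE => Au.
  apply: (@continuousM _ _ (fun u : 'rV[R]_n => qf K u^T) (fun u : 'rV[R]_n => (qf M u^T)^-1)).
    exact: qf_row_cont.
  apply: continuousV; first by rewrite gt_eqF // Mpos // nz.
  exact: qf_row_cont.
have [c cA' cmax] := EVT_max_rV A0 cA cf.
have Ac : A c by rewrite inE in cA'.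
pose mu := f c.
have bound : forall x, qf K x <= mu * qf M x.
  move=> x; have [->|xn0] := eqVneq x 0; first by rewrite /qf !bf0l mulr0.
  pose u := x^T; pose t := `|u|^-1 *: u.
  have un0 : `|u| != 0 by rewrite normr_eq0 trmx_eq0.
  have At : A t by rewrite /A /= normrZ ger0_norm ?invr_ge0 // mulVf.
  have := cmax t; rewrite inE => /(_ At).
  have -> : f t = qf K x / qf M x.
    rewrite /f /t linearZ /= !qfZ trmxK; field.
    by rewrite un0 andbT gt_eqF // Mpos.
  by rewrite ler_pdivrMr // Mpos.
exists mu; split => //.
pose B := mu *: M - K.
have Bs : B^T = B by rewrite /B linearD /= linearN /= linearZ /= hMs hK.
have Bp : forall z, 0 <= qf B z.
  by move=> z; rewrite /B /qf bfDM bfNM bfZM subr_ge0; exact: bound.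
have Bc : qf B c^T = 0.
  rewrite /B /qf bfDM bfNM bfZM /mu /f -/(qf K _) -/(qf M _); field.
  by rewrite gt_eqF // Mpos // nz.
have := psd_null Bs Bp Bc; rewrite /B mulmxBl -scalemxAl => /eqP.
rewrite subr_eq0 => /eqP hE.
by exists c^T; split; [exact: nz | rewrite hE].
Unshelve. all: by end_near.
Qed.

Lemma rayleigh_bound (R : realType) n (K M : 'M[R]_n) : K^T = K -> spd_mx M ->
  exists mu, forall x, qf K x <= mu * qf M x.
Proof.
case: n K M => [|n] K M hK hM.
  by exists 0 => x; rewrite [x]flatmx0 /qf !bf0l mulr0.
by have [mu [_ H]] := rayleigh_eig (ltn0Sn n) hK hM; exists mu.
Qed.

Lemma largest_bound (R : realType) n (K M : 'M[R]_n) w : K^T = K -> spd_mx M ->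
  largest_gen_eigenvalue K M w -> forall x, qf K x <= w * qf M x.
Proof.
move=> hK hM [[phi [phin0 _]] hmax] x.
have n0 : (0 < n)%N.
  case: n K M phi phin0 hK hM hmax x => // K M phi; by rewrite [phi]flatmx0 eqxx.
have [mu [hmu H]] := rayleigh_eig n0 hK hM.
apply: (le_trans (H x)); apply: ler_wpM2r; first exact: qf_ge0_spd.
exact: hmax.
Qed.

Lemma entry_bound (R : realType) n (M : 'M[R]_n) : spd_mx M ->
  exists c, 0 <= c /\ forall (x : 'cV[R]_n) (k : 'I_n), (x k ord0) ^+ 2 <= c * qf M x.
Proof.
move=> hM; have [mu H] := rayleigh_bound (trmx1 R n) hM.
exists (Num.max mu 0); split; first by rewrite le_max lexx orbT.
move=> x k; apply: (le_trans _ (le_trans (H x) _)).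
  rewrite /qf /bf mulmx1 mxE (bigD1 k) //= mxE -expr2 lerDl.
  by apply: sumr_ge0 => j _; rewrite mxE -expr2 sqr_ge0.
by apply: ler_wpM2r; [exact: qf_ge0_spd | rewrite le_max lexx].
Qed.

Local Close Scope classical_set_scope.

Lemma key_scalar (R : realType) (k al t P Q a b w : R) : 0 < k -> 0 < al ->
  t = 1 - k * al -> 0 < t -> 0 <= P -> 0 <= Q -> 0 <= w ->
  a ^+ 2 <= (t / k) * P * Q -> b ^+ 2 <= w * P -> P + a = b ->
  k * P - Q <= w / al.
Proof.
move=> k0 al0 ht t0 P0 Q0 w0 ha hb hP.
have wa : 0 <= w / al by apply: divr_ge0 => //; exact: ltW.
have [->|Pn0] := eqVneq P 0; first by rewrite mulr0 sub0r; lra.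
have Pp : 0 < P by rewrite lt_def Pn0 P0.
pose s := k * al.
have s0 : 0 < s by apply: mulr_gt0.
have hid : a ^+ 2 / t + b ^+ 2 / s - (b - a) ^+ 2 = (s * a + t * b) ^+ 2 / (t * s).
  rewrite ht /s; field.
  by rewrite !gt_eqF // -ht.
have h1 : (b - a) ^+ 2 <= a ^+ 2 / t + b ^+ 2 / s.
  rewrite -subr_ge0 hid; apply: divr_ge0; first exact: sqr_ge0.
  by apply: mulr_ge0; exact: ltW.
have h2 : a ^+ 2 / t <= P * Q / k.
  rewrite ler_pdivrMr //; apply: (le_trans ha); rewrite le_eqVlt; apply/orP; left; apply/eqP.
  ring.
have h3 : b ^+ 2 / s <= w * P / s.
  by rewrite ler_pM2r ?invr_gt0.
have hPb : b - a = P by rewrite -hP; ring.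
rewrite hPb in h1.
have h4 : P ^+ 2 <= P * (Q / k + w / s).
  apply: (le_trans h1); apply: (le_trans (lerD h2 h3)).
  rewrite le_eqVlt; apply/orP; left; apply/eqP; rewrite /s; field.
  by rewrite !gt_eqF.
have h5 : P <= Q / k + w / s.
  by rewrite -(ler_pM2l Pp) -expr2.
have -> : w / al = k * (w / s) by rewrite /s; field; apply/andP; split; rewrite gt_eqF.
have : k * P <= k * (Q / k + w / s) by rewrite ler_pM2l.
have -> : k * (Q / k + w / s) = Q + k * (w / s).
  by field; apply/andP; split; rewrite gt_eqF.
lra.
Qed.

Lemma geo_sum_bound (R : realType) (E : nat -> R) (q K0 : R) (N : nat) :
  0 <= q < 1 -> 0 <= K0 ->
  (forall n, (n < N)%N -> E n.+1 <= E n + q ^+ n * K0) ->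
  (1 - q) * E N <= (1 - q) * E 0 + K0 * (1 - q ^+ N).
Proof.
move=> /andP[q0 q1] K0p; elim: N => [|N IH] H.
  rewrite expr0; lra.
have IH' := IH (fun n hn => H n (ltn_trans hn (ltnSn N))).
have hN := H N (ltnSn N).
have qn0 : 0 <= q ^+ N by apply: exprn_ge0.
have h : (1 - q) * E N.+1 <= (1 - q) * (E N + q ^+ N * K0).
  by apply: ler_wpM2l => //; lra.
rewrite exprS; nra.
Qed.

Lemma abs_le_amgm (R : realType) (ph a : R) : 0 < a -> `|ph| <= ph ^+ 2 / (2 * a) + a / 2.
Proof.
move=> a0; have h : 0 <= (`|ph| - a) ^+ 2 by apply: sqr_ge0.
have e : ph ^+ 2 = `|ph| ^+ 2 by rewrite real_normK // num_real.
rewrite e; have a2 : 0 < 2 * a by rewrite mulr_gt0.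
rewrite -(ler_pM2l a2) mulrDr.
have -> : 2 * a * (`|ph| ^+ 2 / (2 * a)) = `|ph| ^+ 2 by field; rewrite gt_eqF.
nra.
Qed.

Lemma gron (R : realType) (E : nat -> R) (q c0 c1 c2 : R) :
  0 <= q < 1 -> 0 <= c0 -> 0 <= c1 -> 0 <= c2 -> (forall n, 0 <= E n) ->
  (forall n, exists ph : R, ph ^+ 2 <= c2 * (E n + E n.+1) /\
                       E n.+1 <= E n + q ^+ n * (c0 + c1 * `|ph|)) ->
  exists T, forall n, E n <= T.
Proof.
move=> /andP[q0 q1] c00 c10 c20 E0 H.
have q1' : 0 < 1 - q by lra.
pose a := 2 * c1 * c2 / (1 - q) + 1.
have a0 : 0 < a.
  rewrite /a; have : 0 <= 2 * c1 * c2 / (1 - q).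
    by apply: divr_ge0; [nra | lra].
  lra.
pose T0 := E 0 + (c0 + c1 * a / 2) / (1 - q).
have T00 : E 0 <= T0.
  rewrite /T0 lerDl; apply: divr_ge0; last lra.
  have : 0 <= c1 * a / 2 by apply: divr_ge0; [nra | lra].
  lra.
exists (2 * T0).
suff : forall N n, (n <= N)%N -> E n <= 2 * T0 by move=> h n; exact: (h n n (leqnn n)).
elim=> [|N IH] n hn.
  rewrite leqn0 in hn; rewrite (eqP hn); have := E0 0; lra.
rewrite leq_eqVlt in hn; case/orP: hn => [/eqP ->|hn]; last exact: IH.
pose X := Num.max (2 * T0) (E N.+1).
have XT : 2 * T0 <= X by rewrite le_max lexx.
have XE : E N.+1 <= X by rewrite le_max lexx orbT.
have EX : forall k, (k <= N.+1)%N -> E k <= X.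
  move=> k; rewrite leq_eqVlt; case/orP => [/eqP ->//|hk].
  by apply: le_trans (IH k hk) XT.
have X0 : 0 <= X by apply: le_trans (E0 _) XE.
pose K0 := c0 + c1 * (c2 * X / a + a / 2).
have K00 : 0 <= K0.
  rewrite /K0; apply: addr_ge0 => //; apply: mulr_ge0 => //.
  apply: addr_ge0; apply: divr_ge0; try lra; nra.
have step : forall k, (k < N.+1)%N -> E k.+1 <= E k + q ^+ k * K0.
  move=> k hk; have [ph [hph hE]] := H k.
  apply: (le_trans hE); rewrite lerD2l; apply: ler_wpM2l; first exact: exprn_ge0.
  rewrite /K0 lerD2l; apply: ler_wpM2l => //.
  apply: (le_trans (abs_le_amgm ph a0)); rewrite lerD2r.
  have h1 : E k + E k.+1 <= 2 * X.
    have := EX k (ltnW hk); have := EX k.+1 hk; lra.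
  have h2 : ph ^+ 2 <= c2 * (2 * X) by apply: (le_trans hph); apply: ler_wpM2l.
  rewrite ler_pdivrMr ?mulr_gt0 //.
  have -> : c2 * X / a * (2 * a) = c2 * (2 * X) by field; rewrite gt_eqF.
  exact: h2.
have := geo_sum_bound (E := E) (q := q) (K0 := K0) (N := N.+1) _ K00 step.
have qn0 : 0 <= q ^+ N.+1 by apply: exprn_ge0.
move=> /(_ _) h; have {h} h : (1 - q) * E N.+1 <= (1 - q) * E 0 + K0.
  have := h (introT andP (conj q0 q1)); nra.
have h3 : E N.+1 <= T0 + (c1 * c2 * X / a) / (1 - q).
  rewrite -(ler_pM2l q1'); apply: (le_trans h).
  rewrite le_eqVlt; apply/orP; left; apply/eqP; rewrite /T0 /K0; field.
  by apply/andP; split; rewrite gt_eqF.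
have h4 : (c1 * c2 * X / a) / (1 - q) <= X / 2.
  rewrite -mulrA -invfM ler_pdivrMr ?mulr_gt0 //.
  have : 2 * c1 * c2 <= a * (1 - q).
    have -> : a * (1 - q) = 2 * c1 * c2 + (1 - q).
      by rewrite /a; field; rewrite gt_eqF.
    lra.
  move=> ha; have -> : X / 2 * (a * (1 - q)) = X * (a * (1 - q)) / 2 by ring.
  rewrite ler_pdivlMr //; nra.
have [hle|hgt] := leP (E N.+1) (2 * T0) => //.
have XE' : X = E N.+1 by rewrite /X max_r // ltW.
rewrite XE' in h3 h4; lra.
Qed.

Definition rr (R : realType) (gamma alpha : R) := (1 - alpha * (1 - gamma)) / (1 + alpha * gamma).

Lemma drift (R : realType) N p (C : 'M[R]_(p,N)) (gamma dt alpha : R) (v d : nat -> 'cV[R]_N) :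
  0 < dt -> 0 <= gamma -> 0 < alpha ->
  (forall n, C *m v n + (alpha / dt) *: (C *m d n) = 0) ->
  (forall n, d n.+1 = d n + dt *: ((1 - gamma) *: v n + gamma *: v n.+1)) ->
  forall n, C *m d n = (rr gamma alpha) ^+ n *: (C *m d 0).
Proof.
move=> dt0 g0 a0 hc hu; elim=> [|n IH]; first by rewrite expr0 scale1r.
have cv : forall k, C *m v k = - (alpha / dt) *: (C *m d k).
  by move=> k; rewrite scaleNr; apply/eqP; rewrite -addr_eq0; apply/eqP; exact: hc.
have e : C *m d n.+1 = C *m d n + dt *: ((1 - gamma) *: (- (alpha / dt) *: (C *m d n))
                           + gamma *: (- (alpha / dt) *: (C *m d n.+1))).
  by rewrite {1}hu mulmxDr -scalemxAr mulmxDr -!scalemxAr !cv.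
rewrite exprS -scalerA -IH.
move: (C *m d n) (C *m d n.+1) e => A B e.
apply/matrixP => i j; move/matrixP/(_ i j): e; rewrite !mxE => e.
have ag : 0 < 1 + alpha * gamma by rewrite ltr_pwDl // mulr_ge0 // ltW.
move: e; set b := B i j; set a := A i j => e.
have hb : b * (1 + alpha * gamma) = (1 - alpha * (1 - gamma)) * a.
  have -> : b * (1 + alpha * gamma) = b + alpha * gamma * b by ring.
  rewrite {1}e; field; rewrite gt_eqF //.
rewrite /rr; apply: (mulIf (lt0r_neq0 ag)); rewrite hb; field; rewrite gt_eqF //.
Qed.

Lemma rr_lt1 (R : realType) (gamma alpha : R) : 0 <= gamma -> 0 < alpha -> rr gamma alpha < 1.
Proof.
move=> g0 a0; have ag : 0 < 1 + alpha * gamma by rewrite ltr_pwDl // mulr_ge0 // ltW.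
rewrite /rr ltr_pdivrMr // mul1r; nra.
Qed.

Lemma rr_ge (R : realType) (gamma alpha : R) : 0 <= gamma -> 0 < alpha ->
  alpha * (1 - 2 * gamma) <= 2 -> -1 <= rr gamma alpha.
Proof.
move=> g0 a0 h; have ag : 0 < 1 + alpha * gamma by rewrite ltr_pwDl // mulr_ge0 // ltW.
rewrite /rr ler_pdivlMr //; nra.
Qed.

Lemma rr_gt (R : realType) (gamma alpha : R) : 0 <= gamma -> 0 < alpha ->
  alpha * (1 - 2 * gamma) < 2 -> -1 < rr gamma alpha.
Proof.
move=> g0 a0 h; have ag : 0 < 1 + alpha * gamma by rewrite ltr_pwDl // mulr_ge0 // ltW.
rewrite /rr ltr_pdivlMr //; nra.
Qed.

Lemma rr_eq (R : realType) (gamma alpha : R) : 0 <= gamma -> 0 < alpha ->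
  rr gamma alpha * (1 + alpha * gamma) = 1 - alpha * (1 - gamma).
Proof.
move=> g0 a0; have ag : 0 < 1 + alpha * gamma by rewrite ltr_pwDl // mulr_ge0 // ltW.
by rewrite /rr mulfVK // gt_eqF.
Qed.

Lemma bf_CT (R : realType) N p (M K : 'M[R]_N) (C : 'M[R]_(p,N)) (v d y : 'cV[R]_N)
   (l : 'cV[R]_p) : M *m v + K *m d = C^T *m l -> C *m y = 0 ->
   bf M y v + bf K y d = 0.
Proof.
move=> hE hy.
have e : y^T *m (M *m v + K *m d) = (C *m y)^T *m l by rewrite hE trmx_mul mulmxA.
rewrite hy trmx0 mul0mx mulmxDr !mulmxA in e.
move/matrixP/(_ ord0 ord0): e; rewrite [X in X = _]mxE [X in _ = X]mxE.
by rewrite /bf.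
Qed.

Lemma core_id (R : realType) N p (M K : 'M[R]_N) (C : 'M[R]_(p,N)) (gamma dt alpha : R)
  (v d : nat -> 'cV[R]_N) (lam : nat -> 'cV[R]_p) :
  0 <= gamma -> 0 < dt -> 0 < alpha ->
  (forall n, M *m v n + K *m d n = C^T *m lam n) ->
  (forall n, d n.+1 = d n + dt *: ((1 - gamma) *: v n + gamma *: v n.+1)) ->
  let r := rr gamma alpha in
  let V := fun n => v n + (alpha / dt * r ^+ n) *: d 0 in
  forall n y, C *m y = 0 ->
  bf M y (V n.+1 - V n) + dt * bf K y ((1 - gamma) *: V n + gamma *: V n.+1)
   = (r - 1) * r ^+ n * (alpha / dt * bf M y (d 0) - bf K y (d 0)).
Proof.
move=> g0 dt0 a0 hE hu r V n y hy.
have a0' := bf_CT (hE n) hy.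
have a1 := bf_CT (hE n.+1) hy.
rewrite hu !(bfDr, bfZr) in a1.
have hr := rr_eq g0 a0; rewrite -/r in hr.
have ag : 0 < 1 + alpha * gamma by rewrite ltr_pwDl // mulr_ge0 // ltW.
rewrite /V !(bfDr, bfBr, bfNr, bfZr).
move: a0' a1 hr; set x1 := bf M y (v n); set x2 := bf M y (v n.+1).
set k1 := bf K y (v n); set k2 := bf K y (v n.+1); set D0 := bf K y (d n).
set e := bf M y (d 0); set f := bf K y (d 0) => a0' a1 hr.
have -> : x2 = - (D0 + dt * ((1 - gamma) * k1 + gamma * k2)) by lra.
have -> : x1 = - D0 by lra.
rewrite exprS.
have -> : r = (1 - alpha * (1 - gamma)) / (1 + alpha * gamma).
  by apply: (mulIf (lt0r_neq0 ag)); rewrite /= hr.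
field; apply/andP; split; rewrite gt_eqF //.
Qed.

Lemma core (R : realType) N p (M K : 'M[R]_N) (C : 'M[R]_(p,N)) (gamma dt alpha W : R)
  (v d : nat -> 'cV[R]_N) (lam : nat -> 'cV[R]_p) :
  spd_mx M -> K^T = K -> (forall x, 0 <= qf K x) ->
  (forall x, qf K x <= W * qf M x) ->
  0 <= gamma <= 1 -> 0 < dt -> 0 < alpha ->
  (1 / 2 <= gamma \/ (gamma < 1 / 2 /\ alpha * (1 - 2 * gamma) <= 2 /\
      forall x, dt * qf K x <= (2 / (1 - 2 * gamma) - alpha) * qf M x)) ->
  (forall n, M *m v n + K *m d n = C^T *m lam n) ->
  (forall n, C *m v n + (alpha / dt) *: (C *m d n) = 0) ->
  (forall n, d n.+1 = d n + dt *: ((1 - gamma) *: v n + gamma *: v n.+1)) ->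
  exists T, forall n, qf M (v n) <= T.
Proof.
move=> hM hKs hKp hW /andP[g0 g1] dt0 a0 hcase hE hc hu.
have hMs : M^T = M by case: hM.
have hMp : forall x, 0 <= qf M x by move=> x; exact: qf_ge0_spd.
pose r := rr gamma alpha.
pose z := d 0.
pose c := fun n : nat => alpha / dt * r ^+ n.
pose V := fun n => v n + c n *: z.
have hg := drift dt0 g0 a0 hc hu.
have r1 : r < 1 by exact: rr_lt1.
have rm1 : -1 <= r.
  apply: rr_ge => //; case: hcase => [h|[_ [h _]]] //; nra.
have absr : `|r| <= 1 by rewrite ler_norml rm1 ltW.
have hCV : forall n, C *m V n = 0.
  move=> n; rewrite /V mulmxDr -scalemxAr.
  have cv : C *m v n = - (alpha / dt) *: (C *m d n).
    by rewrite scaleNr; apply/eqP; rewrite -addr_eq0; apply/eqP; exact: hc.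
  rewrite cv hg /c; move: (C *m d 0) => B.
  by apply/matrixP => i j; rewrite !mxE; ring.
have hid := core_id g0 dt0 a0 hE hu; rewrite -/r -/z in hid.
have vV : forall n, v n = V n - c n *: z by move=> n; rewrite /V addrK.
have cbound : forall n, c n ^+ 2 <= (alpha / dt) ^+ 2.
  move=> n; rewrite /c exprMn -[X in _ <= X]mulr1 ler_wpM2l ?sqr_ge0 //.
  rewrite -exprM mulnC exprM; apply: exprn_ile1; first exact: sqr_ge0.
  by rewrite -real_normK ?num_real // expr_le1.
suff [T HT] : exists T, forall n, qf M (V n) <= T.
  exists (2 * T + 2 * ((alpha / dt) ^+ 2 * qf M z)) => n.
  rewrite vV; apply: (le_trans (qf_sub_le _ _ hMs hMp)).
  rewrite qfZ; apply: lerD; rewrite ler_pM2l //; try exact: HT.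
  by apply: ler_wpM2r => //; exact: cbound.
have hcase' : (gamma < 1 / 2 /\ alpha * (1 - 2 * gamma) = 2) \/ alpha * (1 - 2 * gamma) < 2.
  case: hcase => [h|[h1 [h2 _]]]; first by right; nra.
  by case: (ltgtP (alpha * (1 - 2 * gamma)) 2) => h; [right | lra | left].
case: hcase' => [[hg12 hIII]|hA].
  have hK0 : forall x, qf K x = 0.
    move=> x; case: hcase => [h|[_ [_ h]]]; first lra.
    have e : 2 / (1 - 2 * gamma) - alpha = 0.
      apply/eqP; rewrite subr_eq0; apply/eqP.
      have hh : 1 - 2 * gamma != 0 by apply/eqP; lra.
      apply: (mulIf hh); rewrite /= divfK //; lra.
    have := h x; rewrite e mul0r => hx; have := hKp x.
    have := pmulr_rle0 (qf K x) dt0; lra.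
  exists ((alpha / dt) ^+ 2 * qf M z) => n.
  have h3 := bf_CT (hE n) (hCV n).
  have hbK : bf K (V n) (d n) = 0.
    have := cs_bf (V n) (d n) hKs hKp; rewrite hK0 mul0r => h.
    apply/eqP; rewrite -sqrf_eq0; apply/eqP/le_anti; rewrite h sqr_ge0 //.
  rewrite hbK addr0 vV bfBr bfZr in h3.
  have hcs := cs_bf (V n) z hMs hMp.
  have hE0 := hMp (V n); have hz0 := hMp z.
  have hcb := cbound n.
  move: h3 hcs hE0 hz0 hcb; rewrite -/(qf M (V n)).
  set e := qf M (V n); set bb := bf M (V n) z; set cn := c n; set qz := qf M z.
  set a2 := (alpha / dt) ^+ 2 => h3 hcs hE0 hz0 hcb.
  have ee : e = cn * bb by lra.
  have : e ^+ 2 <= a2 * qz * e.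
    rewrite {1}ee exprMn; apply: (le_trans (ler_wpM2l (sqr_ge0 cn) hcs)).
    have eq0 : 0 <= e * qz by apply: mulr_ge0.
    nra.
  have [->|en0] := eqVneq e 0; first by move=> _; apply: mulr_ge0 => //; exact: sqr_ge0.
  have ep : 0 < e by rewrite lt_def en0 hE0.
  by rewrite expr2 ler_pM2r.
have rgt : -1 < r by apply: rr_gt.
have absr1 : `|r| < 1 by rewrite ltr_norml rgt r1.
pose W' := Num.max W 0.
have W'0 : 0 <= W' by rewrite le_max lexx orbT.
have hW' : forall x, qf K x <= W' * qf M x.
  move=> x; apply: (le_trans (hW x)); apply: ler_wpM2r => //; rewrite le_max lexx //.
pose phi := fun y => alpha / dt * bf M y z - bf K y z.
pose c2 := 2 * (alpha / dt) ^+ 2 * qf M z + 2 * W' * qf K z.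
have c20 : 0 <= c2.
  apply: addr_ge0; apply: mulr_ge0; try apply: mulr_ge0 => //; try exact: sqr_ge0; done.
have hphi : forall y, phi y ^+ 2 <= c2 * qf M y.
  move=> y; rewrite /phi /c2.
  have h1 := cs_bf y z hMs hMp; have h2 := cs_bf y z hKs hKp.
  have h3 := hW' y; have hy := hMp y; have hz := hMp z; have hkz := hKp z; have hky := hKp y.
  set u := bf M y z in h1 *; set w := bf K y z in h2 *.
  have s1 : (alpha / dt * u - w) ^+ 2 <= 2 * ((alpha / dt) ^+ 2 * u ^+ 2) + 2 * w ^+ 2.
    rewrite -exprMn; have := sqr_ge0 (alpha / dt * u + w); nra.
  apply: (le_trans s1).
  have s2 : (alpha / dt) ^+ 2 * u ^+ 2 <= (alpha / dt) ^+ 2 * (qf M y * qf M z).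
    by apply: ler_wpM2l => //; exact: sqr_ge0.
  have s3 : w ^+ 2 <= W' * qf M y * qf K z.
    apply: (le_trans h2); apply: ler_wpM2r => //.
  have a20 : 0 <= (alpha / dt) ^+ 2 by exact: sqr_ge0.
  nra.
pose E := fun n => qf M (V n).
pose U := fun n => (1 - gamma) *: V n + gamma *: V n.+1.
have step : forall n, E n.+1 <= E n + 2 * (((r - 1) * r ^+ n) ^+ 2 * c2 / alpha
                                   + (r - 1) * r ^+ n * phi (U n)).
  move=> n.
  pose Dv := V n.+1 - V n.
  have hCD : C *m Dv = 0 by rewrite /Dv mulmxBr !hCV subr0.
  have hCU : C *m U n = 0 by rewrite /U mulmxDr -!scalemxAr !hCV !scaler0 addr0.
  have hU := hid n (U n) hCU; have hD := hid n Dv hCD.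
  rewrite -/Dv -/(U n) -/(phi _) -/(phi Dv) in hU hD.
  have eV : V n.+1 = V n + Dv by rewrite /Dv addrC subrK.
  have eU : U n = V n + gamma *: Dv.
    rewrite /U /Dv; apply/matrixP => i j; rewrite !mxE; ring.
  set rho := (r - 1) * r ^+ n in hU hD *.
  have hEn : E n.+1 = E n + 2 * bf M (V n) Dv + qf M Dv by rewrite /E eV qfD.
  have hbU : bf M (U n) Dv = bf M (V n) Dv + gamma * qf M Dv by rewrite eU bfDl bfZl.
  rewrite hbU -/(qf K (U n)) in hU.
  set P := qf M Dv in hEn hU hD *; set Q := dt * qf K (U n) in hU *.
  have P0 : 0 <= P by exact: hMp.
  have Q0 : 0 <= Q by apply: mulr_ge0; [exact: ltW | exact: hKp].
  have rc0 : 0 <= rho ^+ 2 * c2 / alpha.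
    by apply: divr_ge0; [apply: mulr_ge0 => //; exact: sqr_ge0 | exact: ltW].
  suff key : (1 / 2 - gamma) * P - Q <= rho ^+ 2 * c2 / alpha.
    rewrite hEn; lra.
  case: hcase => [hg2|[hg2 [_ hL]]].
    have : (1 / 2 - gamma) * P <= 0 by apply: mulr_le0_ge0 => //; lra.
    lra.
  pose k := 1 / 2 - gamma.
  have k0 : 0 < k by rewrite /k; lra.
  pose t := 1 - k * alpha.
  have t0 : 0 < t by rewrite /t /k; nra.
  have eL : 2 / (1 - 2 * gamma) - alpha = t / k.
    rewrite /t /k; field; apply/eqP; lra.
  apply: (@key_scalar _ k alpha t P Q (dt * bf K Dv (U n)) (rho * phi Dv) (rho ^+ 2 * c2)) => //.
  - by apply: mulr_ge0 => //; exact: sqr_ge0.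
  - have hcs := cs_bf Dv (U n) hKs hKp.
    have hl := hL Dv; rewrite eL in hl.
    have hk := hKp Dv; have hu' := hKp (U n).
    rewrite exprMn.
    have : dt ^+ 2 * bf K Dv (U n) ^+ 2 <= dt ^+ 2 * (qf K Dv * qf K (U n)).
      by apply: ler_wpM2l => //; exact: sqr_ge0.
    move=> h; apply: (le_trans h).
    have -> : dt ^+ 2 * (qf K Dv * qf K (U n)) = (dt * qf K Dv) * Q by rewrite /Q; ring.
    by apply: ler_wpM2r.
    rewrite exprMn -[X in _ <= X]mulrA; apply: ler_wpM2l; first exact: sqr_ge0.
    exact: hphi.
have hE0 : forall n, 0 <= E n by move=> n; exact: hMp.
have q0 : 0 <= `|r| < 1 by rewrite normr_ge0 absr1.
have := @gron R E `|r| (2 * (r - 1) ^+ 2 * c2 / alpha) (2 * `|r - 1|) c2 q0.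
apply.
- by apply: divr_ge0; [apply: mulr_ge0 => //; apply: mulr_ge0 => //; exact: sqr_ge0 | exact: ltW].
- by apply: mulr_ge0.
- exact: c20.
- exact: hE0.
move=> n; exists (phi (U n)); split.
  apply: (le_trans (hphi _)); apply: ler_wpM2l => //.
  apply: qf_convex => //; exact/andP.
apply: (le_trans (step n)); rewrite lerD2l.
have rn0 : 0 <= `|r| ^+ n by apply: exprn_ge0.
have rn1 : `|r| ^+ n <= 1 by apply: exprn_ile1.
have e1 : ((r - 1) * r ^+ n) ^+ 2 <= (r - 1) ^+ 2 * `|r| ^+ n.
  rewrite exprMn; apply: ler_wpM2l; first exact: sqr_ge0.
  have -> : (r ^+ n) ^+ 2 = (`|r| ^+ n) ^+ 2 by rewrite -normrX real_normK // num_real.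
  nra.
have e2 : `|(r - 1) * r ^+ n| = `|r - 1| * `|r| ^+ n by rewrite normrM normrX.
have hab : (r - 1) * r ^+ n * phi (U n) <= `|r - 1| * `|r| ^+ n * `|phi (U n)|.
  by rewrite -e2 -normrM ler_norm.
have hr10 : 0 <= `|r - 1| := normr_ge0 _.
have hca : 0 <= c2 / alpha by apply: divr_ge0 => //; exact: ltW.
have : ((r - 1) * r ^+ n) ^+ 2 * c2 / alpha <= (r - 1) ^+ 2 * `|r| ^+ n * (c2 / alpha).
  by rewrite -mulrA; apply: ler_wpM2r.
move: hab; set A1 := `|phi (U n)|; set B1 := ((r - 1) * r ^+ n) ^+ 2 * c2 / alpha.
set X1 := (r - 1) * r ^+ n * phi (U n) => hab hB.
have -> : `|r| ^+ n * (2 * (r - 1) ^+ 2 * c2 / alpha + 2 * `|r - 1| * A1)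
   = 2 * ((r - 1) ^+ 2 * `|r| ^+ n * (c2 / alpha)) + 2 * (`|r - 1| * `|r| ^+ n * A1).
  by rewrite /A1; ring.
lra.
Qed.

Lemma qf_diag_col (R : realType) S (m : 'I_S -> nat) (A : forall i, 'M[R]_(m i))
  (x : forall i, 'cV[R]_(m i)) :
  qf (mxdiag A) (mxcol x) = \sum_i qf (A i) (x i).
Proof.
rewrite /qf /bf -mulmxA mul_mxdiag_mxcol tr_mxcol mul_mxrow_mxcol summxE.
by apply: eq_bigr => i _; rewrite mulmxA.
Qed.

Lemma qf_diag (R : realType) S (m : 'I_S -> nat) (A : forall i, 'M[R]_(m i))
  (y : 'cV[R]_(\sum_i m i)) :
  qf (mxdiag A) y = \sum_i qf (A i) (submxcol y i).
Proof. by rewrite -{1}(submxcolK y) qf_diag_col. Qed.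

Lemma submxcolZ (R : realType) S (m : 'I_S -> nat) (a : R) (B : 'cV[R]_(\sum_i m i)) i :
  submxcol (a *: B) i = a *: submxcol B i.
Proof. by apply/matrixP => j k; rewrite !mxE. Qed.

Lemma bs_subcol (R : realType) S (m : 'I_S -> nat) b (x : nat -> 'M[R]_(\sum_i m i, b)) i :
  bounded_seq x -> bounded_seq (fun n => submxcol (x n) i).
Proof. by move=> [C1 h1]; exists C1 => n j k; rewrite mxE. Qed.

Lemma bs_mul (R : realType) a b c (A : 'M[R]_(a, b)) (x : nat -> 'M[R]_(b, c)) :
  bounded_seq x -> bounded_seq (fun n => A *m x n).
Proof.
move=> [C0 hC]; pose B' := Num.max C0 0.
have hB : forall n k l, `|x n k l| <= B'.
  by move=> n k l; rewrite le_max (ltW (hC n k l)).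
have B0 : 0 <= B' by rewrite le_max lexx orbT.
pose SA := \sum_i \sum_k `|A i k|.
exists (SA * B' + 1) => n i j; rewrite mxE.
apply: (le_lt_trans (ler_norm_sum _ _ _)).
apply: (@le_lt_trans _ _ (\sum_k `|A i k| * B')).
  apply: ler_sum => k _; rewrite normrM; apply: ler_wpM2l => //.
rewrite -mulr_suml ltr_pwDr // ler_wpM2r //.
rewrite /SA (bigD1 i) //= lerDl; apply: sumr_ge0 => i' _; apply: sumr_ge0 => * //.
Qed.

Lemma bs_add (R : realType) a b (x y : nat -> 'M[R]_(a, b)) :
  bounded_seq x -> bounded_seq y -> bounded_seq (fun n => x n + y n).
Proof.
move=> [C1 h1] [C2 h2]; exists (C1 + C2) => n i j; rewrite mxE.
by apply: (le_lt_trans (ler_normD _ _)); apply: ltrD.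
Qed.

Lemma bs_scale (R : realType) a b (c : R) (x : nat -> 'M[R]_(a, b)) :
  bounded_seq x -> bounded_seq (fun n => c *: x n).
Proof.
move=> [C1 h1]; exists (`|c| * Num.max C1 0 + 1) => n i j; rewrite mxE normrM.
rewrite ltr_pwDr //; apply: ler_wpM2l => //; rewrite le_max (ltW (h1 n i j)) //.
Qed.

Lemma bs_opp (R : realType) a b (x : nat -> 'M[R]_(a, b)) :
  bounded_seq x -> bounded_seq (fun n => - x n).
Proof. by move=> [C1 h1]; exists C1 => n i j; rewrite mxE normrN. Qed.

Lemma bs_shift (R : realType) a b (x : nat -> 'M[R]_(a, b)) :
  bounded_seq x -> bounded_seq (fun n => x n.+1).
Proof. by move=> [C1 h1]; exists C1 => n i j. Qed.

Lemma bs_geo (R : realType) a b (r : R) (A : 'M[R]_(a, b)) :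
  `|r| <= 1 -> bounded_seq (fun n => r ^+ n *: A).
Proof.
move=> hr; exists (\sum_i \sum_j `|A i j| + 1) => n i j; rewrite mxE normrM normrX.
rewrite ltr_pwDr //; apply: (@le_trans _ _ `|A i j|).
  by rewrite -[X in _ <= X]mul1r ler_wpM2r // exprn_ile1.
rewrite (bigD1 i) //= (bigD1 j) //= -addrA lerDl; apply: addr_ge0; apply: sumr_ge0 => *.
  by [].
by apply: sumr_ge0.
Qed.

Lemma bs_ext (R : realType) a b (x y : nat -> 'M[R]_(a, b)) :
  (forall n, x n = y n) -> bounded_seq x -> bounded_seq y.
Proof. by move=> e [C1 h1]; exists C1 => n i j; rewrite -e. Qed.

Unset Implicit Arguments. Set Strict Implicit.

Theorem mainTheorem5 (R : realType) (S p : nat) (m : 'I_S -> nat)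
  (M K : forall i : 'I_S, 'M[R]_(m i))
  (C : forall i : 'I_S, 'M[R]_(p, m i))
  (gamma dt alpha : R) (wmax : 'I_S -> R)
  (d v : nat -> forall i : 'I_S, 'cV[R]_(m i))
  (lam : nat -> 'cV[R]_p) :
  (1 <= S)%N ->
  (forall i, spd_mx (M i)) ->
  (forall i, spsd_mx (K i)) ->
  (forall i, signed_boolean_mx (C i)) ->
  \rank (mxrow C) = p ->
  0 <= gamma <= 1 -> 0 < dt -> 0 < alpha ->
  (forall i, largest_gen_eigenvalue (K i) (M i) (wmax i)) ->
  ((1 / 2 <= gamma <= 1) \/
   (0 <= gamma < 1 / 2 /\ alpha <= 1 / `|gamma - 1 / 2| /\
    (forall i, dt * wmax i <= 2 / (1 - 2 * gamma) - alpha))) ->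
  (forall n i, M i *m v n i + K i *m d n i = (C i)^T *m lam n) ->
  (forall n, \sum_(i < S) C i *m v n i + (alpha / dt) *: \sum_(i < S) C i *m d n i = 0) ->
  (forall n i, d n.+1 i = d n i + dt *: ((1 - gamma) *: v n i + gamma *: v n.+1 i)) ->
  (forall i, bounded_seq (fun n => v n i)) /\
  (forall i, bounded_seq (fun n => d n.+1 i - d n i)) /\
  bounded_seq (fun n => lam n.+1 - lam n) /\
  bounded_seq (fun n => \sum_(i < S) C i *m d n i).
Proof.
move=> _ hM hK _ hrank hg dt0 a0 hwmax hcase hE hc hu.
have /andP[g0 g1] := hg.
pose Mg := mxdiag M; pose Kg := mxdiag K; pose Cg := mxrow C.
pose vg := fun n => mxcol (v n); pose dg := fun n => mxcol (d n).
have hMg : spd_mx Mg.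
  split.
    rewrite /sym_mx /Mg tr_mxdiag; apply: eq_mxdiag => i; by case: (hM i).
  move=> x xn0; have -> : (x^T *m Mg *m x) ord0 ord0 = qf Mg x by []. rewrite /Mg qf_diag.
  have [i hi] : exists i, submxcol x i != 0.
    apply/existsP; apply: contraR xn0; rewrite negb_exists => /forallP h.
    rewrite -(submxcolK x); apply/eqP; rewrite -mxcol0; apply: eq_mxcol => i.
    by apply/eqP; rewrite -[_ == _]negbK h.
  rewrite (bigD1 i) //=; apply: ltr_pwDl.
    by case: (hM i) => _ /(_ _ hi).
  by apply: sumr_ge0 => j _; apply: qf_ge0_spd.
have hKs : Kg^T = Kg.
  rewrite /Kg tr_mxdiag; apply: eq_mxdiag => i; by case: (hK i).
have hKp : forall x, 0 <= qf Kg x.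
  by move=> x; rewrite /Kg qf_diag; apply: sumr_ge0 => i _; case: (hK i) => _ h; exact: h.
have [W hW] := rayleigh_bound hKs hMg.
have hbnd : forall i x, qf (K i) x <= wmax i * qf (M i) x.
  move=> i; apply: largest_bound => //; by case: (hK i).
have hcase' : 1 / 2 <= gamma \/ (gamma < 1 / 2 /\ alpha * (1 - 2 * gamma) <= 2 /\
      forall x, dt * qf Kg x <= (2 / (1 - 2 * gamma) - alpha) * qf Mg x).
  case: hcase => [/andP[h _]|[/andP[_ h1] [h2 h3]]]; first by left.
  right; split => //; split.
    have e : `|gamma - 1 / 2| = 1 / 2 - gamma by rewrite ler0_norm ?opprB //; lra.
    rewrite e in h2; have hp : 0 < 1 / 2 - gamma by lra.
    rewrite ler_pdivlMr // in h2; lra.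
  move=> x; rewrite /Kg /Mg !qf_diag mulr_sumr mulr_sumr; apply: ler_sum => i _.
  have := hbnd i (submxcol x i); have := h3 i; have := qf_ge0_spd (submxcol x i) (hM i).
  move=> q0 hw hb.
  apply: (le_trans (ler_wpM2l (ltW dt0) hb)); rewrite mulrA; exact: ler_wpM2r.
have hEg : forall n, Mg *m vg n + Kg *m dg n = Cg^T *m lam n.
  move=> n; rewrite /Mg /Kg /vg /dg /Cg !mul_mxdiag_mxcol -mxcolD tr_mxrow mxcol_mul.
  by apply: eq_mxcol => i; exact: hE.
have hcg : forall n, Cg *m vg n + (alpha / dt) *: (Cg *m dg n) = 0.
  by move=> n; rewrite /Cg /vg /dg !mul_mxrow_mxcol; exact: hc.
have hug : forall n, dg n.+1 = dg n + dt *: ((1 - gamma) *: vg n + gamma *: vg n.+1).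
  move=> n; apply/mxcolP => i.
  by rewrite /dg /vg !submxcolD !submxcolZ submxcolD !submxcolZ !mxcolK hu.
have [T hT] := core hMg hKs hKp hW hg dt0 a0 hcase' hEg hcg hug.
have [c [c0 hc0]] := entry_bound hMg.
have bvg : bounded_seq vg.
  exists (2 + c * Num.max T 0) => n k l; rewrite (ord1 l).
  have h1 := hc0 (vg n) k.
  have h2 : c * qf Mg (vg n) <= c * Num.max T 0.
    by apply: ler_wpM2l => //; rewrite le_max (hT n).
  have h3 : `|vg n k ord0| <= 1 + (vg n k ord0) ^+ 2.
    rewrite -[(vg n k ord0) ^+ 2]real_normK ?num_real //; have := sqr_ge0 (`|vg n k ord0| - 1).
    set a := `|vg n k ord0| => h; nra.
  lra.
have bdg : bounded_seq (fun n => dg n.+1 - dg n).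
  apply: (@bs_ext _ _ _ (fun n => dt *: ((1 - gamma) *: vg n + gamma *: vg n.+1))).
    by move=> n; rewrite hug addrAC subrr add0r.
  apply: bs_scale; apply: bs_add; apply: bs_scale => //; exact: bs_shift.
split.
  move=> i; apply: bs_ext (bs_subcol i bvg) => n.
  by rewrite /vg mxcolK.
split.
  move=> i; apply: bs_ext (bs_subcol i bdg) => n.
  by rewrite submxcolD submxcolN /dg !mxcolK.
split.
  have : row_free Cg by rewrite /row_free hrank.
  move=> /row_freeP [B hB].
  have hCT : B^T *m Cg^T = 1%:M by rewrite -trmx_mul hB trmx1.
  have hl : forall n, B^T *m (Mg *m (vg n.+1 - vg n) + Kg *m (dg n.+1 - dg n))
     = lam n.+1 - lam n.
    move=> n.
    rewrite !mulmxBr addrACA -opprD !hEg -mulmxBr mulmxA hCT mul1mx //.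
  apply: bs_ext hl _; apply: bs_mul; apply: bs_add; apply: bs_mul => //.
  by apply: bs_add; [exact: bs_shift | exact: bs_opp].
have hdr := drift dt0 g0 a0 hcg hug.
have hr1 : `|rr gamma alpha| <= 1.
  rewrite ler_norml (ltW (rr_lt1 g0 a0)) andbT; apply: rr_ge => //.
  case: hcase' => [h|[_ [h _]]] //; nra.
apply: bs_ext (bs_geo (Cg *m dg 0) hr1) => n.
by rewrite -hdr /Cg /dg mul_mxrow_mxcol.
Qed.
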